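(* Let $q$ be a non-negative integer and $\Lambda$ a unital commutative ring which is $q$-torsion-free. Let $\mathfrak g$ be a Lie algebra over $\Lambda$ with free presentation $0\to\mathfrak r\to\mathfrak f\xrightarrow{\partial}\mathfrak g\to0$, let $\mathfrak c=\mathfrak f/(\mathfrak r\#_q\mathfrak f)$ and $\bar\partial\colon\mathfrak c\to\mathfrak g$ the map induced by $\partial$. Then there is a natural isomorphism of Lie algebras $[\mathfrak c,\mathfrak c]\xrightarrow{\ \cong\ }\mathfrak g\curlywedge^q\mathfrak g$, $[c_1,c_2]\mapsto\bar\partial(c_1)\wedge\bar\partial(c_2)$.
   Context: All Lie algebras are over $\Lambda$. $\mathfrak r\#_q\mathfrak f$ is the $\Lambda$-submodule (an ideal) of $\mathfrak f$ generated by all $[r,f]$ and $qr'$ with $r,r'\in\mathfrak r$, $f\in\mathfrak f$. For $q\ge1$, the non-abelian $q$-exterior square $\mathfrak g\wedge^q\mathfrak g$ is the Lie algebra generated by symbols $h\wedge g$ and $\{h\}$ ($h,g\in\mathfrak g$) subject to, for all $h,h',g,g'\in\mathfrak g$, $\lambda,\lambda'\in\Lambda$: (1) $\lambda(h\wedge g)=\lambda h\wedge g=h\wedge\lambda g$; (2),(3) additivity in each variable; (4) $[h,h']\wedge g=h\wedge[h',g]-h'\wedge[h,g]$; (5) $h\wedge[g,g']=[g',h]\wedge g-[g,h]\wedge g'$; (6) $[h\wedge g,h'\wedge g']=[h,g]\wedge[h',g']$; (7) $[\{h'\},h\wedge g]=[qh',h]\wedge g+h\wedge[qh',g]$; (8)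 $\{\lambda h+\lambda'h'\}=\lambda\{h\}+\lambda'\{h'\}$; (9) $[\{h\},\{h'\}]=qh\wedge qh'$; (10) $\{[h,g]\}=q(h\wedge g)$; (11) $h\wedge h=0$. For $q=0$, generated by the $h\wedge g$ subject to (1)–(6) and (11). Ellis's exterior square $\mathfrak g\wedge\mathfrak g$ is generated by the $h\wedge g$ subject to (1)–(6) and (11), and $\mathfrak g\curlywedge^q\mathfrak g$ is the image of the natural homomorphism $\mathfrak g\wedge\mathfrak g\to\mathfrak g\wedge^q\mathfrak g$, $h\wedge g\mapsto h\wedge g$. *)

(* Defs.v *)
From HB Require Import structures.
From mathcomp Require Import all_boot all_algebra.
Set Implicit Arguments. Unset Strict Implicit. Unset Printing Implicit Defensive.
Import GRing.Theory.
Local Open Scope ring_scope.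

Record lieAlgebra (R : comPzRingType) := LieAlgebra {
  lie_car :> lmodType R;
  lie_br : lie_car -> lie_car -> lie_car;
  lie_brDl : forall x y z, lie_br (x + y) z = lie_br x z + lie_br y z;
  lie_brDr : forall x y z, lie_br x (y + z) = lie_br x y + lie_br x z;
  lie_brZl : forall (a : R) x y, lie_br (a *: x) y = a *: lie_br x y;
  lie_brZr : forall (a : R) x y, lie_br x (a *: y) = a *: lie_br x y;
  lie_br_alt : forall x, lie_br x x = 0;
  lie_jacobi : forall x y z,
    lie_br x (lie_br y z) + lie_br y (lie_br z x) + lie_br z (lie_br x y) = 0
}.
Arguments lie_br {R} l _ _.
Notation "[[ x , y ]]" := (lie_br _ x y) (format "[[ x ,  y ]]").

Definition lie_hom (R : comPzRingType) (L M : lieAlgebra R) (h : L -> M) : Prop :=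
  (forall (a : R) (x y : L), h (a *: x + y) = a *: h x + h y) /\
  (forall x y : L, h [[x, y]] = [[h x, h y]]).

Definition q_torsion_free (R : comPzRingType) (q : nat) : Prop :=
  (0 < q)%N -> forall x : R, q%:R * x = 0 -> x = 0.

Definition is_free_lie (R : comPzRingType) (F : lieAlgebra R) : Prop :=
  exists (X : Type) (i : X -> F),
    forall (L : lieAlgebra R) (phi : X -> L),
      exists! h : F -> L, lie_hom h /\ forall x, h (i x) = phi x.

Inductive lspan (R : comPzRingType) (V : lmodType R) (S : V -> Prop) : V -> Prop :=
  | lspan0 : lspan S 0
  | span_gen x : S x -> lspan S x
  | span_add x y : lspan S x -> lspan S y -> lspan S (x + y)
  | span_scale (a : R) x : lspan S x -> lspan S (a *: x).

(* r #_q f, where r = ker d for a homomorphism d : F -> G. *)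
Definition sharp_q (R : comPzRingType) (q : nat) (F G : lieAlgebra R)
    (d : F -> G) : F -> Prop :=
  lspan (fun z : F =>
          (exists r f : F, d r = 0 /\ z = [[r, f]]) \/
          (exists r' : F, d r' = 0 /\ z = (q%:R : R) *: r')).

(* Relations (1)-(11) of the q-exterior square (only (1)-(6),(11) if q = 0),
   for symbols  w h g  (= h /\ g)  and  b h  (= {h}). *)
Definition qext_rels (R : comPzRingType) (q : nat) (G L : lieAlgebra R)
    (w : G -> G -> L) (b : G -> L) : Prop :=
     (forall (a : R) h g, a *: w h g = w (a *: h) g /\ a *: w h g = w h (a *: g))
  /\ (forall h h' g, w (h + h') g = w h g + w h' g)
  /\ (forall h g g', w h (g + g') = w h g + w h g')
  /\ (forall h h' g, w [[h, h']] g = w h [[h', g]] - w h' [[h, g]])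
  /\ (forall h g g', w h [[g, g']] = w [[g', h]] g - w [[g, h]] g')
  /\ (forall h g h' g', [[w h g, w h' g']] = w [[h, g]] [[h', g']])
  /\ (forall h, w h h = 0)
  /\ ((0 < q)%N ->
        (forall h' h g, [[b h', w h g]] =
                        w [[(q%:R : R) *: h', h]] g + w h [[(q%:R : R) *: h', g]])
     /\ (forall (a a' : R) h h', b (a *: h + a' *: h') = a *: b h + a' *: b h')
     /\ (forall h h', [[b h, b h']] = w ((q%:R : R) *: h) ((q%:R : R) *: h'))
     /\ (forall h g, b [[h, g]] = (q%:R : R) *: w h g)).

(* (E, w, b) is the Lie algebra G /\^q G presented by the generators
   h /\ g, {h} (the latter only for q >= 1) and relations qext_rels:
   it satisfies the relations and is universal among Lie algebras with such
   elements. For q = 0 this is Ellis's exterior square G /\ G. *)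
Definition is_qext_square (R : comPzRingType) (q : nat) (G E : lieAlgebra R)
    (w : G -> G -> E) (b : G -> E) : Prop :=
  qext_rels q w b /\
  forall (L : lieAlgebra R) (w' : G -> G -> L) (b' : G -> L),
    qext_rels q w' b' ->
    exists! h : E -> L, [/\ lie_hom h, (forall x y, h (w x y) = w' x y) &
                            ((0 < q)%N -> forall x, h (b x) = b' x)].

(* Main.v *)
Require Import Defs.
From HB Require Import structures.
From mathcomp Require Import all_boot all_algebra.
From mathcomp Require Import boolp functions.
From Stdlib Require Import ProofIrrelevance.
Set Implicit Arguments. Unset Strict Implicit. Unset Printing Implicit Defensive.
Import GRing.Theory.
Local Open Scope ring_scope.

Section Gen.
Variables (R : comPzRingType) (L : lieAlgebra R).
Lemma br0l (x : L) : [[0, x]] = 0.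
Proof. have := lie_brZl 0 0 x. rewrite !scale0r. done. Qed.
Lemma br0r (x : L) : [[x, 0]] = 0.
Proof. have := lie_brZr 0 x 0. rewrite !scale0r. done. Qed.
Lemma brNl (x y : L) : [[- x, y]] = - [[x, y]].
Proof. by rewrite -scaleN1r lie_brZl scaleN1r. Qed.
Lemma brNr (x y : L) : [[x, - y]] = - [[x, y]].
Proof. by rewrite -scaleN1r lie_brZr scaleN1r. Qed.
Lemma brBl (x y z : L) : [[x - y, z]] = [[x, z]] - [[y, z]].
Proof. by rewrite lie_brDl brNl. Qed.
Lemma brBr (x y z : L) : [[z, x - y]] = [[z, x]] - [[z, y]].
Proof. by rewrite lie_brDr brNr. Qed.
Lemma br_anti (x y : L) : [[x, y]] = - [[y, x]].
Proof.
have := lie_br_alt (x + y); rewrite lie_brDl !lie_brDr !lie_br_alt add0r addr0.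
by move/eqP; rewrite addr_eq0 => /eqP.
Qed.
End Gen.

Section Hom.
Variables (R : comPzRingType) (L M : lieAlgebra R) (h : L -> M) (hh : lie_hom h).
Lemma hom0 : h 0 = 0.
Proof.
have := (proj1 hh) 1 0 0; rewrite !scale1r addr0 => E.
by apply: (addrI (h 0)); rewrite addr0 -E.
Qed.
Lemma homD x y : h (x + y) = h x + h y.
Proof. by have := (proj1 hh) 1 x y; rewrite !scale1r. Qed.
Lemma homZ a x : h (a *: x) = a *: h x.
Proof. by have := (proj1 hh) a x 0; rewrite !addr0 hom0 addr0. Qed.
Lemma homN x : h (- x) = - h x.
Proof. by rewrite -scaleN1r homZ scaleN1r. Qed.
Lemma homB x y : h (x - y) = h x - h y.
Proof. by rewrite homD homN. Qed.
Lemma homBr x y : h [[x, y]] = [[h x, h y]].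
Proof. exact: (proj2 hh). Qed.
End Hom.

Record lideal (R : comPzRingType) (L : lieAlgebra R) := LIdeal {
  ip :> L -> Prop;
  ip0 : ip 0;
  ipD : forall x y, ip x -> ip y -> ip (x + y);
  ipZ : forall a x, ip x -> ip (a *: x);
  ipB : forall x y, ip y -> ip [[x, y]] }.

Section QuotDef.
Variables (R : comPzRingType) (L : lieAlgebra R) (J : lideal L).
Definition qT := {P : L -> Prop | exists x : L, P = (fun y => J (y - x))}.
End QuotDef.
HB.instance Definition _ (R : comPzRingType) (L : lieAlgebra R) (J : lideal L) := gen_eqMixin (@qT R L J).
HB.instance Definition _ (R : comPzRingType) (L : lieAlgebra R) (J : lideal L) := gen_choiceMixin (@qT R L J).

Section Quot.
Variables (R : comPzRingType) (L : lieAlgebra R) (J : lideal L).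
Lemma ipN x : J x -> J (- x).
Proof. by move=> Jx; rewrite -scaleN1r; apply: ipZ. Qed.
Lemma ipBB x y : J x -> J y -> J (x - y).
Proof. by move=> ? ?; apply: ipD => //; apply: ipN. Qed.
Lemma ipBl x y : J x -> J [[x, y]].
Proof. by move=> ?; rewrite br_anti; apply/ipN/ipB. Qed.

Definition qpi (x : L) : qT J := exist _ (fun y => J (y - x)) (ex_intro _ x erefl).
Lemma qT_eq (p p' : qT J) : proj1_sig p = proj1_sig p' -> p = p'.
Proof. case: p p' => [P HP] [P' HP'] /= E; subst; f_equal; apply: proof_irrelevance. Qed.
Lemma qpi_eq x y : qpi x = qpi y <-> J (x - y).
Proof.
split.
  move=> /(f_equal (@proj1_sig _ _)) /= /(congr1 (fun P => P x)) /= <-.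
  by rewrite subrr; apply: ip0.
move=> Jxy; apply: qT_eq => /=; apply: funext => z; apply: propext; split => Jz.
  by have := ipD Jz Jxy; rewrite addrA subrK.
by have := ipBB Jz Jxy; rewrite opprB addrA subrK.
Qed.
Lemma qpi_surj (p : qT J) : exists x, p = qpi x.
Proof. case: p => P [x E]; exists x; apply: qT_eq => /=; exact E. Qed.
Definition rep (p : qT J) : L := proj1_sig (cid (qpi_surj p)).
Lemma repK p : qpi (rep p) = p.
Proof. rewrite /rep; case: cid => x /= ->; done. Qed.
Lemma rep_pi x : J (rep (qpi x) - x).
Proof. by apply/qpi_eq; rewrite repK. Qed.
Lemma qind (P : qT J -> Prop) : (forall x, P (qpi x)) -> forall p, P p.
Proof. by move=> H p; rewrite -(repK p). Qed.

Definition qadd p p' := qpi (rep p + rep p').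
Definition qopp p := qpi (- rep p).
Definition qzero := qpi 0.
Definition qscale a p := qpi (a *: rep p).
Definition qbr p p' := qpi [[rep p, rep p']].

Lemma qaddE x y : qadd (qpi x) (qpi y) = qpi (x + y).
Proof.
apply/qpi_eq; have := ipD (rep_pi x) (rep_pi y).
by rewrite opprD addrACA.
Qed.
Lemma qoppE x : qopp (qpi x) = qpi (- x).
Proof. by apply/qpi_eq; have := ipN (rep_pi x); rewrite opprB opprK addrC. Qed.
Lemma qscaleE a x : qscale a (qpi x) = qpi (a *: x).
Proof. by apply/qpi_eq; have := ipZ a (rep_pi x); rewrite scalerBr. Qed.
Lemma qbrE x y : qbr (qpi x) (qpi y) = qpi [[x, y]].
Proof.
apply/qpi_eq.
have -> : [[rep (qpi x), rep (qpi y)]] - [[x, y]] =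
  [[rep (qpi x) - x, rep (qpi y)]] + [[x, rep (qpi y) - y]].
  by rewrite brBl brBr addrA subrK.
by apply: ipD; [apply: ipBl; apply: rep_pi | apply: ipB; apply: rep_pi].
Qed.

Lemma qaddA : associative qadd.
Proof. by elim/qind => x; elim/qind => y; elim/qind => z; rewrite !qaddE addrA. Qed.
Lemma qaddC : commutative qadd.
Proof. by elim/qind => x; elim/qind => y; rewrite !qaddE addrC. Qed.
Lemma qadd0 : left_id qzero qadd.
Proof. by elim/qind => x; rewrite /qzero qaddE add0r. Qed.
Lemma qaddN : left_inverse qzero qopp qadd.
Proof. by elim/qind => x; rewrite qoppE qaddE addNr. Qed.
End Quot.

HB.instance Definition _ (R : comPzRingType) (L : lieAlgebra R) (J : lideal L) := GRing.isZmodule.Build (@qT R L J)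
  (@qaddA R L J) (@qaddC R L J) (@qadd0 R L J) (@qaddN R L J).

Section Quot2.
Variables (R : comPzRingType) (L : lieAlgebra R) (J : lideal L).
Lemma qaddE' x y : (qpi J x + qpi J y : qT J) = qpi J (x + y).
Proof. exact: qaddE. Qed.
Lemma qscaleA a b (v : qT J) : qscale a (qscale b v) = qscale (a * b) v.
Proof. by elim/qind: v => x; rewrite !qscaleE scalerA. Qed.
Lemma qscale1 : left_id 1 (@qscale R L J).
Proof. by elim/qind => x; rewrite qscaleE scale1r. Qed.
Lemma qscaleDr : right_distributive (@qscale R L J) +%R.
Proof.
move=> a; elim/qind => x; elim/qind => y.
by rewrite (qaddE' x y) !qscaleE qaddE' scalerDr.
Qed.
Lemma qscaleDl (v : qT J) : {morph (@qscale R L J)^~ v : a b / a + b}.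
Proof.
move: v; elim/qind => x a b; by rewrite !qscaleE (qaddE' (a *: x)) scalerDl.
Qed.
End Quot2.

HB.instance Definition _ (R : comPzRingType) (L : lieAlgebra R) (J : lideal L) := GRing.Zmodule_isLmodule.Build R (@qT R L J)
  (@qscaleA R L J) (@qscale1 R L J) (@qscaleDr R L J) (@qscaleDl R L J).

Section Quot3.
Variables (R : comPzRingType) (L : lieAlgebra R) (J : lideal L).
Lemma qscaleE' a x : (a *: qpi J x : qT J) = qpi J (a *: x).
Proof. exact: qscaleE. Qed.
Lemma qzeroE : (0 : qT J) = qpi J 0.
Proof. by []. Qed.
Lemma qbrDl x y z : qbr (x + y) z = qbr x z + qbr y (z : qT J).
Proof.
move: x y z; elim/qind => x; elim/qind => y; elim/qind => z.
by rewrite (qaddE' J x y) !qbrE lie_brDl qaddE'.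
Qed.
Lemma qbrDr x y z : qbr x (y + z) = qbr x y + qbr x (z : qT J).
Proof.
move: x y z; elim/qind => x; elim/qind => y; elim/qind => z.
by rewrite (qaddE' J y z) !qbrE lie_brDr qaddE'.
Qed.
Lemma qbrZl a x y : qbr (a *: x) y = a *: qbr x (y : qT J).
Proof.
move: x y; elim/qind => x; elim/qind => y.
by rewrite qscaleE' !qbrE lie_brZl qscaleE'.
Qed.
Lemma qbrZr a x y : qbr x (a *: y) = a *: qbr x (y : qT J).
Proof.
move: x y; elim/qind => x; elim/qind => y.
by rewrite qscaleE' !qbrE lie_brZr qscaleE'.
Qed.
Lemma qbr_alt x : qbr x x = (0 : qT J).
Proof. by move: x; elim/qind => x; rewrite qbrE lie_br_alt. Qed.
Lemma qbr_jacobi x y z : qbr x (qbr y z) + qbr y (qbr z x) + qbr z (qbr x y) = (0 : qT J).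
Proof.
move: x y z; elim/qind => x; elim/qind => y; elim/qind => z.
by rewrite !qbrE !qaddE' lie_jacobi.
Qed.
Definition qLie : lieAlgebra R :=
  @LieAlgebra R (qT J) (@qbr R L J) qbrDl qbrDr qbrZl qbrZr qbr_alt qbr_jacobi.
Lemma qpi_hom : lie_hom (L := L) (M := qLie) (qpi J).
Proof.
split.
  by move=> a x y; rewrite /= qscaleE' qaddE'.
by move=> x y; rewrite /= qbrE.
Qed.
End Quot3.

Record lsub (R : comPzRingType) (L : lieAlgebra R) := LSub {
  sp :> L -> Prop;
  sp0 : sp 0;
  spD : forall x y, sp x -> sp y -> sp (x + y);
  spZ : forall a x, sp x -> sp (a *: x);
  spB : forall x y, sp x -> sp y -> sp [[x, y]] }.

Section SubDef.
Variables (R : comPzRingType) (L : lieAlgebra R) (S : lsub L).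
Definition sT := {x : L | S x}.
End SubDef.
HB.instance Definition _ (R : comPzRingType) (L : lieAlgebra R) (S : lsub L) := gen_eqMixin (@sT R L S).
HB.instance Definition _ (R : comPzRingType) (L : lieAlgebra R) (S : lsub L) := gen_choiceMixin (@sT R L S).

Section Sub.
Variables (R : comPzRingType) (L : lieAlgebra R) (S : lsub L).
Lemma sT_eq (u v : sT S) : proj1_sig u = proj1_sig v -> u = v.
Proof. case: u v => [x Hx] [y Hy] /= E; subst; f_equal; apply: proof_irrelevance. Qed.
Lemma spN x : S x -> S (- x).
Proof. by move=> Sx; rewrite -scaleN1r; apply: spZ. Qed.
Definition sadd (u v : sT S) : sT S := exist _ _ (spD (proj2_sig u) (proj2_sig v)).
Definition sopp (u : sT S) : sT S := exist _ _ (spN (proj2_sig u)).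
Definition szero : sT S := exist _ _ (sp0 S).
Definition sscale a (u : sT S) : sT S := exist _ _ (spZ a (proj2_sig u)).
Definition sbr (u v : sT S) : sT S := exist _ _ (spB (proj2_sig u) (proj2_sig v)).
Lemma saddA : associative sadd.
Proof. by move=> ? ? ?; apply: sT_eq; rewrite /= addrA. Qed.
Lemma saddC : commutative sadd.
Proof. by move=> ? ?; apply: sT_eq; rewrite /= addrC. Qed.
Lemma sadd0 : left_id szero sadd.
Proof. by move=> ?; apply: sT_eq; rewrite /= add0r. Qed.
Lemma saddN : left_inverse szero sopp sadd.
Proof. by move=> ?; apply: sT_eq; rewrite /= addNr. Qed.
End Sub.
HB.instance Definition _ (R : comPzRingType) (L : lieAlgebra R) (S : lsub L) :=
  GRing.isZmodule.Build (@sT R L S)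
  (@saddA R L S) (@saddC R L S) (@sadd0 R L S) (@saddN R L S).
Section Sub2.
Variables (R : comPzRingType) (L : lieAlgebra R) (S : lsub L).
Lemma sscaleA a b (v : sT S) : sscale a (sscale b v) = sscale (a * b) v.
Proof. by apply: sT_eq; rewrite /= scalerA. Qed.
Lemma sscale1 : left_id 1 (@sscale R L S).
Proof. by move=> ?; apply: sT_eq; rewrite /= scale1r. Qed.
Lemma sscaleDr : right_distributive (@sscale R L S) +%R.
Proof. by move=> ? ? ?; apply: sT_eq; rewrite /= scalerDr. Qed.
Lemma sscaleDl (v : sT S) : {morph (@sscale R L S)^~ v : a b / a + b}.
Proof. by move=> ? ?; apply: sT_eq; rewrite /= scalerDl. Qed.
End Sub2.
HB.instance Definition _ (R : comPzRingType) (L : lieAlgebra R) (S : lsub L) :=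
  GRing.Zmodule_isLmodule.Build R (@sT R L S)
  (@sscaleA R L S) (@sscale1 R L S) (@sscaleDr R L S) (@sscaleDl R L S).
Section Sub3.
Variables (R : comPzRingType) (L : lieAlgebra R) (S : lsub L).
Lemma sbrDl (x y z : sT S) : sbr (x + y) z = sbr x z + sbr y z.
Proof. by apply: sT_eq; rewrite /= lie_brDl. Qed.
Lemma sbrDr (x y z : sT S) : sbr x (y + z) = sbr x y + sbr x z.
Proof. by apply: sT_eq; rewrite /= lie_brDr. Qed.
Lemma sbrZl a (x y : sT S) : sbr (a *: x) y = a *: sbr x y.
Proof. by apply: sT_eq; rewrite /= lie_brZl. Qed.
Lemma sbrZr a (x y : sT S) : sbr x (a *: y) = a *: sbr x y.
Proof. by apply: sT_eq; rewrite /= lie_brZr. Qed.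
Lemma sbr_alt (x : sT S) : sbr x x = 0.
Proof. by apply: sT_eq; rewrite /= lie_br_alt. Qed.
Lemma sbr_jacobi (x y z : sT S) : sbr x (sbr y z) + sbr y (sbr z x) + sbr z (sbr x y) = 0.
Proof. by apply: sT_eq; rewrite /= lie_jacobi. Qed.
Definition sLie : lieAlgebra R :=
  @LieAlgebra R (sT S) (@sbr R L S) sbrDl sbrDr sbrZl sbrZr sbr_alt sbr_jacobi.
Lemma sval_hom : lie_hom (L := sLie) (M := L) (fun u => proj1_sig u).
Proof. by split. Qed.
End Sub3.

Definition dlt (R : comPzRingType) (X : Type) (x y : X) : R := if `[< x = y >] then 1 else 0.

Lemma comb (R : comPzRingType) (M : lmodType R) (X : Type) (g : X -> M) (s : seq (R * X)) :
  (forall y, \sum_(p <- s) p.1 * dlt R p.2 y = 0) -> \sum_(p <- s) p.1 *: g p.2 = 0.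
Proof.
have [n le_sn] := ubnP (size s); elim: n s le_sn => // n IH [|[a y] s] /= Hs H.
  by rewrite big_nil.
set P := fun p : R * X => `[< p.2 = y >].
rewrite big_cons /= (bigID P) /=.
have E1 : \sum_(p <- s | P p) p.1 *: g p.2 = (\sum_(p <- s | P p) p.1) *: g y.
  rewrite scaler_suml; apply: eq_bigr => p /asboolP ->; done.
have Hy := H y; rewrite big_cons (bigID P) /= in Hy.
have E2 : \sum_(p <- s | P p) p.1 * dlt R p.2 y = \sum_(p <- s | P p) p.1.
  by apply: eq_bigr => p /asboolP ->; rewrite /dlt asboolT // mulr1.
have E3 : \sum_(p <- s | ~~ P p) p.1 * dlt R p.2 y = 0.
  by rewrite big1 // => p /asboolPn Hp; rewrite /dlt asboolF // mulr0.
rewrite E2 E3 addr0 /dlt asboolT // mulr1 in Hy.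
rewrite E1 addrA -scalerDl Hy scale0r add0r -big_filter.
apply: IH.
  by rewrite size_filter (leq_ltn_trans (count_size _ _)).
move=> x; rewrite big_filter.
have [exy|nxy] := pselect (y = x).
  subst x; rewrite big1 // => p /asboolPn Hp; by rewrite /dlt asboolF // mulr0.
have Hx := H x; rewrite big_cons (bigID P) /= in Hx.
have E4 : \sum_(p <- s | P p) p.1 * dlt R p.2 x = 0.
  by rewrite big1 // => p /asboolP ->; rewrite /dlt asboolF // mulr0.
rewrite E4 in Hx.
by rewrite /dlt asboolF // mulr0 add0r add0r in Hx.
Qed.

Definition Dsp (R : comPzRingType) (F : lieAlgebra R) :=
  lspan (fun z : F => exists x y : F, z = [[x, y]]).
Arguments Dsp {R F}.

Lemma lspanN (R : comPzRingType) (V : lmodType R) (S : V -> Prop) x :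
  lspan S x -> lspan S (- x).
Proof. by move=> H; rewrite -scaleN1r; apply: span_scale. Qed.
Lemma lspanB (R : comPzRingType) (V : lmodType R) (S : V -> Prop) x y :
  lspan S x -> lspan S y -> lspan S (x - y).
Proof. by move=> ? ?; apply: span_add => //; apply: lspanN. Qed.

Section Ab.
Variables (R : comPzRingType) (M : lmodType R).
Definition abbr (x y : M) : M := 0.
Lemma abDl x y z : abbr (x + y) z = abbr x z + abbr y z. Proof. by rewrite /abbr addr0. Qed.
Lemma abDr x y z : abbr x (y + z) = abbr x y + abbr x z. Proof. by rewrite /abbr addr0. Qed.
Lemma abZl a x y : abbr (a *: x) y = a *: abbr x y. Proof. by rewrite /abbr scaler0. Qed.
Lemma abZr a x y : abbr x (a *: y) = a *: abbr x y. Proof. by rewrite /abbr scaler0. Qed.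
Lemma abalt x : abbr x x = 0. Proof. by []. Qed.
Lemma abjac x y z : abbr x (abbr y z) + abbr y (abbr z x) + abbr z (abbr x y) = 0.
Proof. by rewrite /abbr !addr0. Qed.
Definition abLie : lieAlgebra R := @LieAlgebra R M abbr abDl abDr abZl abZr abalt abjac.
End Ab.

Lemma hom_comp (R : comPzRingType) (L M N : lieAlgebra R) (f : L -> M) (g : M -> N) :
  lie_hom f -> lie_hom g -> lie_hom (fun x => g (f x)).
Proof.
move=> [f1 f2] [g1 g2]; split; first by move=> a x y; rewrite f1 g1.
by move=> x y; rewrite f2 g2.
Qed.
Lemma hom_id (R : comPzRingType) (L : lieAlgebra R) : lie_hom (fun x : L => x).
Proof. by []. Qed.

Definition univ_free (R : comPzRingType) (F : lieAlgebra R) (X : Type) (i : X -> F) :=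
  forall (L : lieAlgebra R) (phi : X -> L),
      exists! h : F -> L, lie_hom h /\ forall x, h (i x) = phi x.

Lemma free_gen (R : comPzRingType) (F : lieAlgebra R) (X : Type) (i : X -> F)
  (univ : univ_free i) (S : lsub F) : (forall x, S (i x)) -> forall z, S z.
Proof.
move=> HS z.
have [h [ [hh hi] _] ] := univ (sLie S) (fun x => exist _ (i x) (HS x)).
have [h0 [_ u] ] := univ F i.
have e1 := u (fun x => x) (conj (hom_id F) (fun x => erefl)).
have e2 := u (fun x => proj1_sig (h x)) (conj (hom_comp hh (sval_hom S)) (fun x => f_equal (@proj1_sig _ _) (hi x))).
have E : z = proj1_sig (h z).
  have := congr1 (fun f => f z) e1; have := congr1 (fun f => f z) e2; simpl; congruence.
rewrite E; exact: proj2_sig.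
Qed.

Section Torsion.
Variables (R : comPzRingType) (q : nat) (Htf : q_torsion_free R q).
Variables (F : lieAlgebra R) (X : Type) (i : X -> F) (univ : univ_free i).
Definition lin (s : seq (R * X)) : F := \sum_(p <- s) p.1 *: i p.2.

Definition Spred (z : F) := exists s, Dsp (z - lin s).
Lemma S0 : Spred 0.
Proof. by exists [::]; rewrite /lin big_nil subrr; apply: lspan0. Qed.
Lemma SD x y : Spred x -> Spred y -> Spred (x + y).
Proof.
move=> [s1 H1] [s2 H2]; exists (s1 ++ s2); rewrite /lin big_cat /=.
by rewrite opprD addrACA; apply: span_add.
Qed.
Lemma SZ a x : Spred x -> Spred (a *: x).
Proof.
move=> [s H]; exists [seq (a * p.1, p.2) | p <- s]; rewrite /lin big_map /=.
have -> : \sum_(p <- s) (a * p.1) *: i p.2 = a *: lin s.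
  by rewrite /lin scaler_sumr; apply: eq_bigr => p _; rewrite scalerA.
by rewrite -scalerBr; apply: span_scale.
Qed.
Lemma SB x y : Spred x -> Spred y -> Spred [[x, y]].
Proof.
move=> _ _; exists [::]; rewrite /lin big_nil subr0.
by apply: span_gen; exists x, y.
Qed.
Definition Ssub : lsub F := LSub S0 SD SZ SB.

Lemma torsion (r : F) : (0 < q)%N -> Dsp ((q%:R : R) *: r) -> Dsp r.
Proof.
move=> q0 Dqr.
have [s Hs] : Spred r.
  apply: (free_gen univ (S := Ssub)) => x.
  exists [:: (1, x)]; rewrite /lin big_cons big_nil /= scale1r addr0 subrr.
  exact: lspan0.
have [al [ [ah ai] _] ] := @univ (abLie (X -> R^o)) (fun x => (fun y => dlt R x y)).
have aD : forall z, Dsp z -> al z = 0.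
  move=> z; elim => [|x [u [v ->] ]|x y _ Hx _ Hy|a x _ Hx].
  - exact: hom0.
  - by rewrite (homBr ah).
  - by rewrite (homD ah) Hx Hy addr0.
  - by rewrite (homZ ah) Hx scaler0.
have aL : forall s, al (lin s) = (fun y => \sum_(p <- s) p.1 * dlt R p.2 y).
  elim => [|p t IH].
    by rewrite /lin big_nil (hom0 ah); apply: funext => y; rewrite big_nil.
  rewrite /lin big_cons (homD ah) (homZ ah) ai -/(lin t) IH.
  by apply: funext => y; rewrite big_cons.
have Hq := aD _ Dqr.
rewrite (homZ ah) -[r](subrK (lin s)) (homD ah) (aD _ Hs) add0r aL in Hq.
have Hc : forall y, \sum_(p <- s) p.1 * dlt R p.2 y = 0.
  move=> y; apply: (Htf q0).
  by have := congr1 (fun f => f y) Hq.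
have := comb i Hc; rewrite -/(lin s) => E.
by rewrite E subr0 in Hs.
Qed.
End Torsion.

Section Jac.
Variables (R : comPzRingType) (L : lieAlgebra R).
Lemma jac4 (x x' y : L) : [[ [[x, x']], y]] = [[x, [[x', y]] ]] - [[x', [[x, y]] ]].
Proof.
have := lie_jacobi x x' y.
rewrite (br_anti y x) brNr (br_anti y [[x, x']]).
by move/eqP; rewrite subr_eq0 => /eqP <-.
Qed.
Lemma jac5 (x y y' : L) : [[x, [[y, y']] ]] = [[ [[y', x]], y]] - [[ [[y, x]], y']].
Proof.
have := lie_jacobi x y y'.
move/eqP; rewrite addr_eq0 => /eqP E.
rewrite (br_anti [[y', x]] y) (br_anti [[y, x]] y') (br_anti y x) brNr opprK -E.
by rewrite addrC addrK.
Qed.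
Lemma jacder (z x y : L) : [[z, [[x, y]] ]] = [[ [[z, x]], y]] + [[x, [[z, y]] ]].
Proof. by rewrite jac4 subrK. Qed.
End Jac.

Section Rels.
Variables (R : comPzRingType) (q : nat) (G E : lieAlgebra R) (w : G -> G -> E) (b : G -> E).
Hypothesis H : qext_rels q w b.
Lemma wDl h h' g : w (h + h') g = w h g + w h' g.
Proof. by case: H => _ [H2 _]. Qed.
Lemma wDr h g g' : w h (g + g') = w h g + w h g'.
Proof. by case: H => _ [_ [H3 _] ]. Qed.
Lemma wZl a h g : w (a *: h) g = a *: w h g.
Proof. by case: H => H1 _; rewrite (proj1 (H1 a h g)). Qed.
Lemma wZr a h g : w h (a *: g) = a *: w h g.
Proof. by case: H => H1 _; rewrite (proj2 (H1 a h g)). Qed.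
Lemma w4 h h' g : w [[h, h']] g = w h [[h', g]] - w h' [[h, g]].
Proof. by case: H => _ [_ [_ [H4 _] ] ]. Qed.
Lemma w5 h g g' : w h [[g, g']] = w [[g', h]] g - w [[g, h]] g'.
Proof. by case: H => _ [_ [_ [_ [H5 _] ] ] ]. Qed.
Lemma w6 h g h' g' : [[w h g, w h' g']] = w [[h, g]] [[h', g']].
Proof. by case: H => _ [_ [_ [_ [_ [H6 _] ] ] ] ]. Qed.
Lemma w11 h : w h h = 0.
Proof. by case: H => _ [_ [_ [_ [_ [_ [H11 _] ] ] ] ] ]. Qed.
Lemma w0l g : w 0 g = 0.
Proof. by have := wZl 0 0 g; rewrite !scale0r. Qed.
Lemma w0r h : w h 0 = 0.
Proof. by have := wZr 0 h 0; rewrite !scale0r. Qed.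
Lemma wNl h g : w (- h) g = - w h g.
Proof. by rewrite -scaleN1r wZl scaleN1r. Qed.
Lemma wNr h g : w h (- g) = - w h g.
Proof. by rewrite -scaleN1r wZr scaleN1r. Qed.
Lemma w_anti h g : w h g = - w g h.
Proof.
have := w11 (h + g); rewrite wDl !wDr !w11 add0r addr0.
by move/eqP; rewrite addr_eq0 => /eqP.
Qed.
Lemma w_jac x y z : w x [[y, z]] + w y [[z, x]] + w z [[x, y]] = 0.
Proof.
have Ew := w4 x y z.
rewrite (w_anti [[x, y]] z) (br_anti x z) wNr opprK in Ew.
by rewrite -Ew addNr.
Qed.
Lemma bzero : (0 < q)%N -> b 0 = 0.
Proof.
case: H => _ [_ [_ [_ [_ [_ [_ Hq] ] ] ] ] ] q0.
have [_ [H8 _] ] := Hq q0.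
by have := H8 0 0 0 0; rewrite !scale0r !addr0.
Qed.
Lemma bD : (0 < q)%N -> forall h h', b (h + h') = b h + b h'.
Proof.
case: H => _ [_ [_ [_ [_ [_ [_ Hq] ] ] ] ] ] q0 h h'.
have [_ [H8 _] ] := Hq q0.
by have := H8 1 1 h h'; rewrite !scale1r.
Qed.
Lemma bZ : (0 < q)%N -> forall a h, b (a *: h) = a *: b h.
Proof.
move=> q0 a h; case: H => _ [_ [_ [_ [_ [_ [_ Hq] ] ] ] ] ].
have [_ [H8 _] ] := Hq q0.
by have := H8 a 0 h 0; rewrite !scale0r !addr0.
Qed.
Lemma b10 : (0 < q)%N -> forall h g, b [[h, g]] = (q%:R : R) *: w h g.
Proof.
move=> q0; case: H => _ [_ [_ [_ [_ [_ [_ Hq] ] ] ] ] ].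
by have [_ [_ [_ H10] ] ] := Hq q0.
Qed.

Definition cbr (u v : (E * G)%type) : (E * G)%type := (w u.2 v.2, [[u.2, v.2]]).
Lemma cbrDl x y z : cbr (x + y) z = cbr x z + cbr y z.
Proof. by rewrite /cbr /= wDl lie_brDl. Qed.
Lemma cbrDr x y z : cbr x (y + z) = cbr x y + cbr x z.
Proof. by rewrite /cbr /= wDr lie_brDr. Qed.
Lemma cbrZl a x y : cbr (a *: x) y = a *: cbr x y.
Proof. by rewrite /cbr /= wZl lie_brZl. Qed.
Lemma cbrZr a x y : cbr x (a *: y) = a *: cbr x y.
Proof. by rewrite /cbr /= wZr lie_brZr. Qed.
Lemma cbr_alt x : cbr x x = 0.
Proof. by rewrite /cbr w11 lie_br_alt. Qed.
Lemma cbr_jac x y z : cbr x (cbr y z) + cbr y (cbr z x) + cbr z (cbr x y) = 0.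
Proof.
rewrite /cbr /=.
have -> : forall (a a' a'' : E) (c c' c'' : G),
  (a, c) + (a', c') + (a'', c'') = (a + a' + a'', c + c' + c'') :> (E * G) by [].
by rewrite w_jac lie_jacobi.
Qed.
Definition CExt : lieAlgebra R := @LieAlgebra R (E * G)%type cbr cbrDl cbrDr cbrZl cbrZr cbr_alt cbr_jac.
Lemma snd_hom : lie_hom (L := CExt) (M := G) snd.
Proof. by split. Qed.
End Rels.

Section Sharp.
Variables (R : comPzRingType) (q : nat) (F G : lieAlgebra R) (d : F -> G) (dhom : lie_hom d).
Definition K1 := fun z : F => exists r f, d r = 0 /\ z = [[r, f]].
Lemma sharp_genB x y : sharp_q q d y -> sharp_q q d [[x, y]].
Proof.
elim => [|z Kz|z z' _ Hz _ Hz'|a z _ Hz].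
- rewrite br0r; exact: lspan0.
- have dz : d z = 0.
    case: Kz => [ [r [f [dr ->] ] ]|[r [dr ->] ] ].
      by rewrite (homBr dhom) dr br0l.
    by rewrite (homZ dhom) dr scaler0.
  apply: span_gen; left; exists (- z), x; split.
    by rewrite (homN dhom) dz oppr0.
  by rewrite brNl -br_anti.
- by rewrite lie_brDr; apply: span_add.
- by rewrite lie_brZr; apply: span_scale.
Qed.
Definition sharpI : lideal F :=
  @LIdeal R F (sharp_q q d) (lspan0 _) (@span_add _ _ _) (@span_scale _ _ _) sharp_genB.

Lemma sharp_dec z : sharp_q q d z ->
  exists A r, [/\ lspan K1 A, d r = 0 & z = A + (q%:R : R) *: r].
Proof.
elim => [|z0 Kz|z1 z2 _ [A1 [r1 [H1 d1 ->] ] ] _ [A2 [r2 [H2 d2 ->] ] ]|a z0 _ [A [r [HA dr ->] ] ] ].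
- exists 0, 0; split; [exact: lspan0 | exact: hom0 | by rewrite scaler0 addr0].
- case: Kz => [ [r [f [dr ->] ] ]|[r [dr ->] ] ].
    exists [[r, f]], 0; split; [by apply: span_gen; exists r, f | exact: hom0 | by rewrite scaler0 addr0].
  exists 0, r; split; [exact: lspan0 | exact: dr | by rewrite add0r].
- exists (A1 + A2), (r1 + r2); split; first by apply: span_add.
    by rewrite (homD dhom) d1 d2 addr0.
  by rewrite scalerDr addrACA.
- exists (a *: A), (a *: r); split; first by apply: span_scale.
    by rewrite (homZ dhom) dr scaler0.
  by rewrite scalerDr !scalerA mulrC.
Qed.
End Sharp.

Unset Implicit Arguments.

Theorem lemma6p4 (R : comPzRingType) (q : nat) (Htf : q_torsion_free R q)
    (G F : lieAlgebra R) (d : F -> G)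
    (Ffree : is_free_lie F) (dhom : lie_hom d) (dsurj : forall g : G, exists f, d f = g)
    (E : lieAlgebra R) (w : G -> G -> E) (b : G -> E)
    (HE : is_qext_square q w b)
    (E0 : lieAlgebra R) (w0 : G -> G -> E0) (b0 : G -> E0)
    (HE0 : is_qext_square 0 w0 b0)
    (phi : E0 -> E) (phihom : lie_hom phi)
    (phiw : forall h g, phi (w0 h g) = w h g) :
  let I := sharp_q q d in
  let D := lspan (fun z : F => exists x y : F, z = [[x, y]]) in
  let Im := fun e : E => exists z : E0, phi z = e in
  exists Theta : F -> E,
    [/\ (forall x y, D x -> D y -> (Theta x = Theta y <-> I (x - y))),
        (forall (a : R) x y, D x -> D y -> Theta (a *: x + y) = a *: Theta x + Theta y),
        (forall x y, D x -> D y -> Theta [[x, y]] = [[Theta x, Theta y]]),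
        ((forall x, D x -> Im (Theta x)) /\
         (forall e, Im e -> exists2 x, D x & Theta x = e)) &
        (forall c1 c2 : F, Theta [[c1, c2]] = w (d c1) (d c2))].
Proof.
move=> I D Im.
have [X [i univ] ] := Ffree.
have [s sK] : exists s : G -> F, forall g, d (s g) = g.
  by exists (fun g => proj1_sig (cid (dsurj g))) => g; case: cid.
have [HEr HEu] := HE.
have [Phi [ [Phh Phi_i] _] ] := univ (CExt HEr) (fun x => (0, d (i x))).
have sndPhi : forall x, (Phi x).2 = d x.
  have [h0 [_ u] ] := univ G (fun x => d (i x)).
  have e1 := u d (conj dhom (fun x => erefl)).
  have e2 := u (fun x => (Phi x).2) (conj (hom_comp Phh (snd_hom HEr)) (fun x => f_equal snd (Phi_i x))).
  move=> x; have := congr1 (fun f => f x) e1; have := congr1 (fun f => f x) e2; simpl; congruence.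
pose tau := fun x => (Phi x).1.
have tau0 : tau 0 = 0 by rewrite /tau (hom0 Phh).
have tauD : forall x y, tau (x + y) = tau x + tau y by move=> x y; rewrite /tau (homD Phh).
have tauZ : forall a x, tau (a *: x) = a *: tau x by move=> a x; rewrite /tau (homZ Phh).
have tauB : forall x y, tau (x - y) = tau x - tau y by move=> x y; rewrite /tau (homB Phh).
have taubr : forall x y, tau [[x, y]] = w (d x) (d y).
  by move=> x y; rewrite /tau (homBr Phh) /= !sndPhi.
have DB : forall x y, D x -> D y -> D (x - y) by move=> x y; apply: lspanB.
have tauDbr : forall x y, D x -> D y -> [[tau x, tau y]] = w (d x) (d y).
  move=> x y Dx Dy; elim: Dx => [|z [u [v ->] ]|z z' _ Hz _ Hz'|a z _ Hz].
  - by rewrite tau0 br0l (hom0 dhom) (w0l HEr).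
  - rewrite taubr (homBr dhom).
    elim: Dy => [|z1 [u' [v' ->] ]|z1 z1' _ Hz1 _ Hz1'|a z1 _ Hz1].
    + by rewrite tau0 br0r (hom0 dhom) (w0r HEr).
    + by rewrite taubr (w6 HEr) (homBr dhom).
    + by rewrite tauD lie_brDr Hz1 Hz1' (homD dhom) (wDr HEr).
    + by rewrite tauZ lie_brZr Hz1 (homZ dhom) (wZr HEr).
  - by rewrite tauD lie_brDl Hz Hz' (homD dhom) (wDl HEr).
  - by rewrite tauZ lie_brZl Hz (homZ dhom) (wZl HEr).
have qtau : (0 < q)%N -> forall x, D x -> (q%:R : R) *: tau x = b (d x).
  move=> q0 x; elim => [|z [u [v ->] ]|z z' _ Hz _ Hz'|a z _ Hz].
  - by rewrite tau0 scaler0 (hom0 dhom) (bzero HEr q0).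
  - by rewrite taubr (homBr dhom) (b10 HEr q0).
  - by rewrite tauD scalerDr Hz Hz' (homD dhom) (bD HEr q0).
  - by rewrite tauZ scalerA mulrC -scalerA Hz (homZ dhom) (bZ HEr q0).
have tauI : forall z, D z -> I z -> tau z = 0.
  move=> z Dz Iz; have [A [r [HA dr Ez] ] ] := sharp_dec dhom Iz.
  have [tA DA] : tau A = 0 /\ D A.
    elim: HA => [|z0 [r0 [f [dr0 ->] ] ]|z1 z2 _ [t1 D1] _ [t2 D2]|a z0 _ [t1 D1] ].
    - by split; [exact: tau0 | exact: lspan0].
    - by split; [rewrite taubr dr0 (w0l HEr) | apply: span_gen; exists r0, f].
    - by split; [rewrite tauD t1 t2 addr0 | apply: span_add].
    - by split; [rewrite tauZ t1 scaler0 | apply: span_scale].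
  have Dqr : D ((q%:R : R) *: r).
    have -> : (q%:R : R) *: r = z - A by rewrite Ez addrAC subrr add0r.
    exact: DB.
  case: (posnP q) => [q0|qpos].
    by move: Ez; rewrite q0 mulr0n scale0r addr0 => ->.
  have Dr := torsion Htf univ qpos Dqr.
  by rewrite Ez tauD tA add0r tauZ (qtau qpos r Dr) dr (bzero HEr qpos).
pose J := @sharpI R q F G d dhom.
pose Qc := qLie J.
pose pi : F -> Qc := qpi J.
have pihom : lie_hom pi := qpi_hom J.
have piE : forall x y, pi x = pi y <-> I (x - y) := qpi_eq J.
have piD : forall x y, pi x + pi y = pi (x + y) by move=> x y; rewrite (homD pihom).
have piZ : forall a x, a *: pi x = pi (a *: x) by move=> a x; rewrite (homZ pihom).
have piB : forall x y, pi x - pi y = pi (x - y) by move=> x y; rewrite (homB pihom).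
have pibr : forall x y, [[pi x, pi y]] = pi [[x, y]] by move=> x y; rewrite (homBr pihom).
have pi0 : pi 0 = 0 := hom0 pihom.
have key : forall x x' y y', d x = d x' -> d y = d y' -> pi [[x, y]] = pi [[x', y']].
  move=> x x' y y' ex ey; apply/piE.
  have -> : [[x, y]] - [[x', y']] = [[x - x', y]] + [[x', y - y']].
    by rewrite brBl brBr addrA subrK.
  apply: span_add; apply: span_gen; left.
    by exists (x - x'), y; split => //; rewrite (homB dhom) ex subrr.
  exists (- (y - y')), x'; split; last by rewrite brNl -br_anti.
  by rewrite (homN dhom) (homB dhom) ey subrr oppr0.
have keyq : forall x x', d x = d x' -> pi ((q%:R : R) *: x) = pi ((q%:R : R) *: x').
  move=> x x' ex; apply/piE; rewrite -scalerBr; apply: span_gen; right.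
  by exists (x - x'); split => //; rewrite (homB dhom) ex subrr.
pose w' := fun h g => pi [[s h, s g]].
pose b' := fun h => pi ((q%:R : R) *: s h).
have wd : forall x y, w' (d x) (d y) = pi [[x, y]] by move=> x y; apply: key; rewrite sK.
have bd : forall x, b' (d x) = pi ((q%:R : R) *: x) by move=> x; apply: keyq; rewrite sK.
have Qrels : qext_rels q w' b'.
  refine (conj _ (conj _ (conj _ (conj _ (conj _ (conj _ (conj _ _))))))).
  - move=> a h g; case: (dsurj h) => x <-; case: (dsurj g) => y <-.
    by rewrite -!(homZ dhom) !wd !piZ lie_brZl lie_brZr.
  - move=> h h' g; case: (dsurj h) => x <-; case: (dsurj h') => x' <-; case: (dsurj g) => y <-.
    by rewrite -(homD dhom) !wd piD lie_brDl.
  - move=> h g g'; case: (dsurj h) => x <-; case: (dsurj g) => y <-; case: (dsurj g') => y' <-.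
    by rewrite -(homD dhom) !wd piD lie_brDr.
  - move=> h h' g; case: (dsurj h) => x <-; case: (dsurj h') => x' <-; case: (dsurj g) => y <-.
    by rewrite -!(homBr dhom) !wd piB jac4.
  - move=> h g g'; case: (dsurj h) => x <-; case: (dsurj g) => y <-; case: (dsurj g') => y' <-.
    by rewrite -!(homBr dhom) !wd piB jac5.
  - move=> h g h' g'; case: (dsurj h) => x <-; case: (dsurj g) => y <-.
    case: (dsurj h') => x' <-; case: (dsurj g') => y' <-.
    by rewrite -!(homBr dhom) !wd pibr.
  - by move=> h; case: (dsurj h) => x <-; rewrite wd lie_br_alt pi0.
  move=> q0; refine (conj _ (conj _ (conj _ _))).
  - move=> h' h g; case: (dsurj h') => x' <-; case: (dsurj h) => x <-; case: (dsurj g) => y <-.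
    by rewrite bd -!(homZ dhom) -!(homBr dhom) !wd pibr piD jacder.
  - move=> a a' h h'; case: (dsurj h) => x <-; case: (dsurj h') => x' <-.
    rewrite -!(homZ dhom) -(homD dhom) !bd !piZ piD scalerDr !scalerA.
    by rewrite (mulrC a) (mulrC a').
  - move=> h h'; case: (dsurj h) => x <-; case: (dsurj h') => x' <-.
    by rewrite !bd pibr -!(homZ dhom) wd.
  - move=> h g; case: (dsurj h) => x <-; case: (dsurj g) => y <-.
    by rewrite -(homBr dhom) bd wd piZ.
have [psi [ [psih psiw psib] _] ] := HEu Qc w' b' Qrels.
have psitau : forall x, D x -> psi (tau x) = pi x.
  move=> x; elim => [|z [u [v ->] ]|z z' _ Hz _ Hz'|a z _ Hz].
  - by rewrite tau0 (hom0 psih) pi0.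
  - by rewrite taubr psiw wd.
  - by rewrite tauD (homD psih) Hz Hz' piD.
  - by rewrite tauZ (homZ psih) Hz piZ.
have [HE0r HE0u] := HE0.
pose SP := lspan (fun e : E0 => exists h g, e = w0 h g).
have SPB : forall u v, SP u -> SP v -> SP [[u, v]].
  move=> u v Su Sv; elim: Su => [|z [h [g ->] ]|z z' _ Hz _ Hz'|a z _ Hz].
  - by rewrite br0l; apply: lspan0.
  - elim: Sv => [|z1 [h' [g' ->] ]|z1 z1' _ Hz1 _ Hz1'|a z1 _ Hz1].
    + by rewrite br0r; apply: lspan0.
    + by rewrite (w6 HE0r); apply: span_gen; exists [[h, g]], [[h', g']].
    + by rewrite lie_brDr; apply: span_add.
    + by rewrite lie_brZr; apply: span_scale.
  - by rewrite lie_brDl; apply: span_add.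
  - by rewrite lie_brZl; apply: span_scale.
pose SE := @LSub R E0 SP (lspan0 _) (@span_add _ _ _) (@span_scale _ _ _) SPB.
pose w'' := fun h g => (exist _ (w0 h g) (span_gen (ex_intro _ h (ex_intro _ g erefl))) : sLie SE).
have rels0 : qext_rels 0 w'' (fun _ => 0).
  refine (conj _ (conj _ (conj _ (conj _ (conj _ (conj _ (conj _ _))))))).
  - by move=> a h g; split; apply: sT_eq; rewrite /= ?(wZl HE0r) ?(wZr HE0r).
  - by move=> h h' g; apply: sT_eq; rewrite /= (wDl HE0r).
  - by move=> h g g'; apply: sT_eq; rewrite /= (wDr HE0r).
  - by move=> h h' g; apply: sT_eq; rewrite /= (w4 HE0r).
  - by move=> h g g'; apply: sT_eq; rewrite /= (w5 HE0r).
  - by move=> h g h' g'; apply: sT_eq; rewrite /= (w6 HE0r).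
  - by move=> h; apply: sT_eq; rewrite /= (w11 HE0r).
  - by [].
have [hS [ [hSh hSw _] _] ] := HE0u (sLie SE) w'' (fun _ => 0) rels0.
have [h0 [_ u0] ] := HE0u E0 w0 b0 HE0r.
have e1 := u0 (fun x => x) (And3 (hom_id E0) (fun x y => erefl) (fun _ _ => erefl)).
have e2 : h0 = (fun x => proj1_sig (hS x)).
  apply: u0; split.
  - exact: hom_comp hSh (sval_hom SE).
  - by move=> x y; rewrite hSw.
  - by [].
have Espan : forall z : E0, SP z.
  move=> z; have E' : z = proj1_sig (hS z).
    have := congr1 (fun f => f z) e1; have := congr1 (fun f => f z) e2; simpl; congruence.
  rewrite E'; exact: proj2_sig.
exists tau; split.
- move=> x y Dx Dy; split.
    by move=> /(congr1 psi); rewrite !psitau // => /piE.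
  move=> Ixy; apply/eqP; rewrite -subr_eq0 -tauB; apply/eqP.
  by apply: tauI => //; apply: DB.
- by move=> a x y _ _; rewrite tauD tauZ.
- by move=> x y Dx Dy; rewrite taubr tauDbr.
- split.
    rewrite /Im; move=> x; elim => [|z [u [v ->] ]|z z' _ [e1' E1] _ [e2' E2]|a z _ [e' E'] ].
    + by exists 0; rewrite tau0 (hom0 phihom).
    + by exists (w0 (d u) (d v)); rewrite taubr phiw.
    + by exists (e1' + e2'); rewrite tauD (homD phihom) E1 E2.
    + by exists (a *: e'); rewrite tauZ (homZ phihom) E'.
  move=> e [z <-]; elim: (Espan z) => [|z0 [h [g ->] ]|z1 z2 _ [x1 D1 E1] _ [x2 D2 E2]|a z0 _ [x Dx E'] ].
  + by exists 0; [exact: lspan0 | rewrite tau0 (hom0 phihom)].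
  + exists [[s h, s g]]; first by apply: span_gen; exists (s h), (s g).
    by rewrite taubr !sK phiw.
  + by exists (x1 + x2); [apply: span_add | rewrite tauD (homD phihom) E1 E2].
  + by exists (a *: x); [apply: span_scale | rewrite tauZ (homZ phihom) E'].
- exact: taubr.
Qed.
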